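(* Let $a\in\mathbb{C}$ be generic and $f(\zeta)=\sum_{w^*\in\mathcal{V}(\Delta^* )}\zeta^{w^*}+a\,\zeta^{0^*}\in\mathbb{C}[\zeta_v:v\in\mathcal{V}(\Delta)]$, and let $J(f)$ be the ideal generated by the partial derivatives $\partial f/\partial\zeta_v$, $v\in\mathcal{V}(\Delta)$. Let $x^*\in L^*$ lie in the relative interior of a facet of $\Delta^*$. Then $$\zeta^{x^*}\equiv\sum\{\mathbb{C}\,\zeta^{v^*}: v^*\in L^*\cap(\partial\Delta^*\setminus\textstyle\bigcup_{F^*\text{ facet of }\Delta^*}\mathrm{Int}(F^* ))\}\pmod{J(f)},$$ i.e. $\zeta^{x^*}$ is congruent modulo $J(f)$ to a $\mathbb{C}$-linear combination of monomials $\zeta^{v^*}$ with $v^*$ lattice points of $\partial\Delta^*$ lying in faces of dimension less than $n-1$.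
   Context: $L$ is a lattice of rank $n$, $L^*$ its dual; $(\Delta,L)$ is a reflexive polytope (an $n$-dimensional lattice polytope with the origin in its interior such that $\Delta^*=\{y\in L^*_{\mathbb{R}}:\langle y,x\rangle\ge-1\ \forall x\in\Delta\}$ is also a lattice polytope). $\mathcal{V}(\Delta)$, $\mathcal{V}(\Delta^* )$ are the vertex sets, $0^*$ is the origin of $L^*$, and $\mathrm{Int}$ denotes relative interior. The variables $\zeta=(\zeta_v)_{v\in\mathcal{V}(\Delta)}$ are homogeneous coordinates of the toric variety defined by the fan of cones over the faces of $\Delta$; for $v^*\in\Delta^*\cap L^*$ the monomial is $\zeta^{v^*}=\prod_{v\in\mathcal{V}(\Delta)}\zeta_v^{\langle v^*,v\rangle+1}$ (exponents are non-negative integers). *)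

(* Defs.v *)
From HB Require Import structures.
From mathcomp Require Import all_boot all_order all_algebra.
From mathcomp Require Import reals.
From mathcomp Require Import complex.
From mathcomp Require Import mpoly.
Set Implicit Arguments. Unset Strict Implicit. Unset Printing Implicit Defensive.
Import Order.TTheory GRing.Theory Num.Theory.
Local Open Scope ring_scope.

Section Geometry.
Variables (R : realType) (n : nat).
Local Notation vec := 'rV[R]_n.

(* embedding of the lattice L = Z^n (and L^* = Z^n) into R^n *)
Definition lat (x : 'rV[int]_n) : vec := map_mx (fun z : int => z%:~R) x.

Definition dot (y x : vec) : R := \sum_(i < n) y 0 i * x 0 i.

Definition convex_hull (S : seq vec) (x : vec) : Prop :=
  exists t : 'I_(size S) -> R, (forall i, 0 <= t i) /\ \sum_i t i = 1 /\
    x = \sum_i t i *: S`_i.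

Definition affine_hull (P : vec -> Prop) (x : vec) : Prop :=
  exists (S : seq vec) (t : 'I_(size S) -> R),
    (forall y, y \in S -> P y) /\ \sum_i t i = 1 /\ x = \sum_i t i *: S`_i.

Definition is_extreme (P : vec -> Prop) (x : vec) : Prop :=
  P x /\ forall y z (t : R), P y -> P z -> 0 < t < 1 ->
    x = t *: y + (1 - t) *: z -> y = x /\ z = x.

Definition interior (P : vec -> Prop) (x : vec) : Prop :=
  exists e : R, 0 < e /\ forall y : vec, (forall i, `|y 0 i - x 0 i| < e) -> P y.

Definition boundary (P : vec -> Prop) (x : vec) : Prop := P x /\ ~ interior P x.

Definition relint (P : vec -> Prop) (x : vec) : Prop :=
  P x /\ exists e : R, 0 < e /\ forall y : vec, affine_hull P y ->
    (forall i, `|y 0 i - x 0 i| < e) -> P y.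

Definition dual (P : vec -> Prop) (y : vec) : Prop := forall x, P x -> -1 <= dot y x.

Definition proper_face (P F : vec -> Prop) : Prop :=
  exists (c : vec) (b : R), c != 0 /\ (forall y, P y -> b <= dot c y) /\
    forall y, F y <-> (P y /\ dot c y = b).

(* facet: a face of dimension n-1, i.e. containing n affinely independent
   points (rows of Q; affine independence = linear independence of (1, q_i)) *)
Definition facet (P F : vec -> Prop) : Prop :=
  proper_face P F /\ exists Q : 'M[R]_n, (forall i, F (row i Q)) /\
    row_free (row_mx (const_mx 1 : 'M[R]_(n, 1)) Q).

Definition in_facet_interior (P : vec -> Prop) (x : vec) : Prop :=
  exists F, facet P F /\ relint F x.

End Geometry.

Section Algebra.
Variables (R : realType) (n : nat) (V : seq 'rV[int]_n).
Local Notation C := (complex R).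
Local Notation k := (size V).

(* zeta^{y} = prod_{v in V(Delta)} zeta_v^{<y,v>+1}  (V enumerates V(Delta)) *)
Definition zmono (y : 'rV[int]_n) : {mpoly C[k]} :=
  \prod_(i < k) 'X_i ^+ absz ((\sum_(j < n) y 0 j * (V`_i) 0 j) + 1).

Definition in_jacobian (f g : {mpoly C[k]}) : Prop :=
  exists h : 'I_k -> {mpoly C[k]}, g = \sum_(i < k) h i * mderiv i f.

Definition fpoly (W : seq 'rV[int]_n) (a : C) : {mpoly C[k]} :=
  \sum_(w <- W) zmono w + a *: zmono 0.

End Algebra.

(* Main.v *)
Require Import Defs.
From HB Require Import structures.
From Stdlib Require Import Classical_Prop.
From mathcomp Require Import all_boot all_order all_algebra.
From mathcomp Require Import reals.
From mathcomp Require Import complex.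
From mathcomp Require Import mpoly.
From mathcomp Require Import zify ring lra.
Set Implicit Arguments. Unset Strict Implicit. Unset Printing Implicit Defensive.
Import Order.TTheory GRing.Theory Num.Theory.
Local Open Scope ring_scope.

Section Generic.
Variables (F : closedFieldType) (Pl : lmodType F) (P : eqType) (p0 : P).
Variable J : F -> Pl -> Prop.
Hypothesis J0 : forall a, J a 0.
Hypothesis JD : forall a x y, J a x -> J a y -> J a (x + y).
Hypothesis JZ : forall a c x, J a x -> J a (c *: x).
Variable Z : P -> Pl.
Variables (S : seq P) (T : 'I_(size S) -> seq (F * P)).
Hypothesis uS : uniq S.
Hypothesis HT : forall a (s : 'I_(size S)),
  J a (a *: Z (nth p0 S s) + \sum_(q <- T s) q.1 *: Z q.2).

Lemma J_sum a (I : Type) (r : seq I) (Q : pred I) (G : I -> Pl) :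
  (forall i, Q i -> J a (G i)) -> J a (\sum_(i <- r | Q i) G i).
Proof. by move=> H; apply: big_ind => //; apply: JD. Qed.

Local Notation N := (size S).
Definition Mx : 'M[F]_N := \matrix_(s, t) \sum_(q <- T s | q.2 == nth p0 S t) q.1.

Lemma sum_pick (X : Pl) (x : P) :
  \sum_(t < N | x == nth p0 S t) X = if x \in S then X else 0.
Proof.
case: ifP => xS.
  have i0lt : (index x S < N)%N by rewrite index_mem.
  rewrite (big_pred1 (Ordinal i0lt)) // => t /=.
  by rewrite -{1}(nth_index p0 xS) nth_uniq // -val_eqE.
rewrite big_pred0 // => t; apply/negbTE; apply: contraFN xS => /eqP ->.
by rewrite mem_nth.
Qed.

Lemma decomp (s : 'I_N) :
  \sum_(q <- T s) q.1 *: Z q.2 =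
  \sum_(t < N) Mx s t *: Z (nth p0 S t) + \sum_(q <- T s | q.2 \notin S) q.1 *: Z q.2.
Proof.
rewrite (bigID (fun q => q.2 \in S)); congr (_ + _).
transitivity (\sum_(q <- T s) \sum_(t < N | q.2 == nth p0 S t) q.1 *: Z q.2).
  rewrite big_mkcond /=; apply: eq_bigr => q _; by rewrite sum_pick.
rewrite (eq_bigr (fun q => \sum_(t < N) if q.2 == nth p0 S t then q.1 *: Z q.2 else 0)); last first.
  by move=> q _; rewrite big_mkcond.
rewrite exchange_big; apply: congr_big => // t _; rewrite mxE scaler_suml.
by rewrite [RHS]big_mkcond; apply: congr_big => // q _; case: eqP => // ->.
Qed.


Lemma scal_sum (t : 'I_N) (a : F) :
  \sum_(u < N) (a%:M : 'M[F]_N) t u *: Z (nth p0 S u) = a *: Z (nth p0 S t).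
Proof.
rewrite (bigD1 t) //= big1 ?addr0; first by rewrite mxE eqxx mulr1n.
by move=> u /negbTE tu; rewrite mxE eq_sym tu mulr0n scale0r.
Qed.

Lemma generic : exists E : seq F, forall a, a \notin E -> forall s : 'I_N,
  exists cs : seq (F * P),
  (forall q, q \in cs -> q.2 \notin S /\ exists t : 'I_N, q.2 \in map snd (T t)) /\
  J a (Z (nth p0 S s) - \sum_(q <- cs) q.1 *: Z q.2).
Proof.
have [rs Hrs] := closed_field_poly_normal (char_poly (- Mx)).
exists rs => a aE s.
pose A := a%:M + Mx.
have Au : A \in unitmx.
  rewrite -row_free_unit -kermx_eq0; apply/negPn/negP => /rowV0Pn [v /sub_kermxP vA v0].
  have : eigenvalue (- Mx) a.
    apply/eigenvalueP; exists v => //.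
    move: vA; rewrite /A mulmxDr mul_mx_scalar mulmxN => vA.
    by rewrite -(addrK (v *m Mx) (a *: v)) vA sub0r.
  rewrite eigenvalue_root_char.
  have -> : char_poly (- Mx) = \prod_(z <- rs) ('X - z%:P).
    by rewrite {1}Hrs (monicP (char_poly_monic _)) scale1r.
  by rewrite root_prod_XsubC (negbTE aE).
pose B := invmx A.
pose G u := \sum_(q <- T u | q.2 \notin S) q.1 *: Z q.2.
have Hr t : J a (\sum_(u < N) A t u *: Z (nth p0 S u) + G t).
  have := HT a t; rewrite decomp addrA; congr (J a (_ + _)).
  have Aij u : A t u = (a%:M : 'M_N) t u + Mx t u by rewrite /A [LHS]mxE.
  under [RHS]eq_bigr do rewrite Aij scalerDl.
  by rewrite big_split /= scal_sum.
exists (flatten [seq [seq (- (B s u * q.1), q.2) | q <- T u & q.2 \notin S] | u <- enum 'I_N]).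
split.
  move=> q /flattenP [l /mapP [u _ ->]] /mapP [q']; rewrite mem_filter => /andP [q'S q'T] ->.
  split => //; exists u; apply/mapP; by exists q'.
have := @J_sum a _ (index_enum 'I_N) xpredT (fun u => B s u *: (\sum_(w < N) A u w *: Z (nth p0 S w) + G u))
  (fun u _ => JZ (B s u) (Hr u)).
congr (J a _).
rewrite big_flatten /= big_map big_enum /= -sumrN.
under eq_bigr do rewrite scalerDr.
rewrite big_split /=; congr (_ + _).
  under eq_bigr do rewrite scaler_sumr.
  rewrite exchange_big /=.
  under eq_bigr do under eq_bigr do rewrite scalerA.
  under eq_bigr do rewrite -scaler_suml.
  transitivity (\sum_(w < N) (B *m A) s w *: Z (nth p0 S w)).
    by apply: eq_bigr => w _; rewrite [(B *m A) s w]mxE.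
  rewrite mulVmx //.
  rewrite (bigD1 s) //= big1 ?addr0; first by rewrite mxE eqxx scale1r.
  by move=> u /negbTE tu; rewrite mxE eq_sym tu scale0r.
apply: congr_big => // u _.
rewrite big_map big_filter /G -sumrN scaler_sumr.
apply: congr_big => // q _; by rewrite scaleNr opprK scalerA.
Qed.

End Generic.

Definition pr n (y v : 'rV[int]_n) : int := \sum_(j < n) y 0 j * v 0 j.

Lemma prD n (y z v : 'rV[int]_n) : pr (y + z) v = pr y v + pr z v.
Proof. by rewrite /pr -big_split; apply: eq_bigr => j _; rewrite mxE mulrDl. Qed.

Section Alg.
Variables (R : realType) (n : nat) (V W : seq 'rV[int]_n).
Local Notation C := (complex R).
Local Notation k := (size V).
Local Notation Z := (@zmono R n V).

Definition mon (y : 'rV[int]_n) : 'X_{1..k} := [multinom absz (pr y V`_j + 1)%R | j < k].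

Lemma zmonoE y : Z y = 'X_[mon y].
Proof. by rewrite /zmono mpolyXE_id; apply: eq_bigr => i _; rewrite mnmE. Qed.

Lemma mderiv_f i a : mderiv i (@fpoly R n V W a) =
  \sum_(w <- W) mderiv i (Z w) + a *: mderiv i (Z 0).
Proof. by rewrite /fpoly raddfD /= raddf_sum linearZ. Qed.


Definition Tdem (x : 'rV[int]_n) (i : 'I_k) : seq (C * 'rV[int]_n) :=
  [seq (((absz (pr w V`_i + 1)%R)%:R : C), w + x) | w <- W & absz (pr w V`_i + 1)%R != 0%N].

Definition Teul (i : 'I_k) : seq (C * 'rV[int]_n) :=
  [seq (((absz (pr w V`_i + 1)%R)%:R : C), w) | w <- W & absz (pr w V`_i + 1)%R != 0%N].

Lemma demazure x (i : 'I_k) a :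
  (forall w, w \in W -> forall j : 'I_k, -1 <= pr w V`_j) ->
  pr x V`_i = -1 -> (forall j : 'I_k, j != i -> 0 <= pr x V`_j) ->
  in_jacobian (@fpoly R n V W a) (a *: Z x + \sum_(q <- Tdem x i) q.1 *: Z q.2).
Proof.
move=> HW hi hj.
pose d : 'X_{1..k} := [multinom (if j == i then 0%N else absz (pr x V`_j)) | j < k].
exists (fun j => if j == i then 'X_[d] else 0).
rewrite [RHS](bigD1 i) //= eqxx [X in _ = _ + X]big1 ?addr0; last by move=> j ji; rewrite (negbTE ji) mul0r.
rewrite mderiv_f mulrDr mulr_sumr [RHS]addrC; congr (_ + _).
  rewrite !zmonoE mderivX -!scalerAr -mpolyXD mnmE.
  have -> : pr 0 V`_i = 0 by rewrite /pr big1 // => j _; rewrite mxE mul0r.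
  rewrite add0r /= scale1r; congr (_ *: 'X_[_]); apply/mnmP => j.
  rewrite mnmDE mnmBE !mnmE.
  have -> : pr 0 V`_j = 0 by rewrite /pr big1 // => l _; rewrite mxE mul0r.
  rewrite add0r /=; case: (eqVneq j i) => [->|ji].
    by rewrite hi.
  have := hj _ ji; rewrite /= subn0; lia.
rewrite big_map big_filter [LHS]big_mkcond [LHS]big_seq [RHS]big_seq.
apply: eq_bigr => w wW; rewrite !zmonoE mderivX -scalerAr -mpolyXD mnmE.
case: eqP => /= [e0|e0]; first by rewrite e0 scale0r.
congr (_ *: 'X_[_]); apply/mnmP => j.
rewrite mnmDE mnmBE !mnmE prD.
have := HW w wW j; have := HW w wW i.
case: (eqVneq j i) => [->|ji]; first by rewrite hi /=; move: e0; lia.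
rewrite /= subn0; have := hj _ ji; move: (pr w V`_j) (pr x V`_j) (pr w V`_i) => p q r h1 h2 h3; lia.
Qed.

Lemma euler (i : 'I_k) a :
  in_jacobian (@fpoly R n V W a) (a *: Z 0 + \sum_(q <- Teul i) q.1 *: Z q.2).
Proof.
exists (fun j => if j == i then 'X_i else 0).
rewrite [RHS](bigD1 i) //= eqxx [X in _ = _ + X]big1 ?addr0; last by move=> j ji; rewrite (negbTE ji) mul0r.
rewrite mderiv_f mulrDr mulr_sumr [RHS]addrC; congr (_ + _).
  rewrite !zmonoE mderivX -!scalerAr -mpolyXD mnmE.
  have -> : pr 0 V`_i = 0 by rewrite /pr big1 // => j _; rewrite mxE mul0r.
  rewrite add0r /= scale1r; congr (_ *: 'X_[_]); apply/mnmP => j.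
  rewrite mnmDE mnmBE !mnmE.
  have -> : pr 0 V`_j = 0 by rewrite /pr big1 // => l _; rewrite mxE mul0r.
  by case: (i == j).
rewrite big_map big_filter [LHS]big_mkcond.
apply: eq_bigr => w _; rewrite !zmonoE mderivX -scalerAr -mpolyXD mnmE.
case: eqP => /= [e0|e0]; first by rewrite e0 scale0r.
congr (_ *: 'X_[_]); apply/mnmP => j.
rewrite mnmDE mnmBE !mnmE.
case: (eqVneq i j) => [<-|ij] /=; last by rewrite subn0.
by rewrite add1n subn1 prednK // lt0n; apply/eqP.
Qed.

End Alg.

Section Geo.
Variables (R : realType) (n : nat).
Local Notation vec := 'rV[R]_n.

Lemma dot_lat (y v : 'rV[int]_n) : dot (lat R y) (lat R v) = (pr y v)%:~R.
Proof.
rewrite /dot /pr rmorph_sum; apply: eq_bigr => j _; by rewrite /lat !mxE rmorphM.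
Qed.

Lemma dotC (x y : vec) : dot x y = dot y x.
Proof. by apply: eq_bigr => j _; rewrite mulrC. Qed.

Lemma dotDl (x y z : vec) : dot (x + y) z = dot x z + dot y z.
Proof. by rewrite /dot -big_split; apply: eq_bigr => j _; rewrite mxE mulrDl. Qed.

Lemma dotZl a (x z : vec) : dot (a *: x) z = a * dot x z.
Proof. by rewrite /dot mulr_sumr; apply: eq_bigr => j _; rewrite mxE mulrA. Qed.

Lemma dotNl (x z : vec) : dot (- x) z = - dot x z.
Proof. by rewrite -scaleN1r dotZl mulN1r. Qed.

Lemma dot_sum (y : vec) m (t : 'I_m -> R) (x : 'I_m -> vec) :
  dot y (\sum_i t i *: x i) = \sum_i t i * dot y (x i).
Proof.
rewrite dotC.
transitivity (\sum_i dot (t i *: x i) y); last by apply: eq_bigr => i _; rewrite dotZl dotC.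
rewrite /dot exchange_big /=; apply: eq_bigr => j _.
by rewrite summxE mulr_suml.
Qed.

Lemma dot_self_eq0 (x : vec) : dot x x = 0 -> x = 0.
Proof.
move=> h; apply/rowP => j; rewrite mxE.
have H i : true -> 0 <= x 0 i * x 0 i by rewrite -expr2 sqr_ge0.
have := @psumr_eq0P R _ xpredT (fun i => x 0 i * x 0 i) H h j isT.
by move/eqP; rewrite mulf_eq0 orbb => /eqP.
Qed.


Lemma small_step m (f : 'I_m -> R) (e : R) : 0 < e ->
  exists2 d, 0 < d & forall i, `|d * f i| < e.
Proof.
move=> e0; pose S := \sum_i `|f i|.
have S0 : 0 <= S by apply: sumr_ge0 => i _.
have S1 : 0 < 1 + S by apply: ltr_pwDl.
exists (e / (1 + S)); first by rewrite divr_gt0.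
move=> i; rewrite normrM (gtr0_norm (divr_gt0 e0 S1)).
have fS : `|f i| <= S by rewrite /S (bigD1 i) //= lerDl sumr_ge0.
apply: (le_lt_trans (y := e / (1 + S) * S)).
  by rewrite ler_wpM2l // ltW // divr_gt0.
apply: (lt_le_trans (y := e / (1 + S) * (1 + S))).
  by rewrite ltr_pM2l ?divr_gt0 // ltrDr.
by rewrite divfK // lt0r_neq0.
Qed.

Lemma mem_hull (S : seq vec) i : (i < size S)%N -> convex_hull S S`_i.
Proof.
move=> hi; pose i0 := Ordinal hi.
exists (fun j : 'I_(size S) => (j == i0)%:R); split; first by move=> j; rewrite ler0n.
split.
  rewrite (bigD1 i0) //= eqxx big1 ?addr0 // => j /negbTE ->; done.
rewrite (bigD1 i0) //= eqxx scale1r big1 ?addr0 // => j /negbTE ->.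
by rewrite scale0r.
Qed.

Lemma dual_hullP (S : seq vec) y :
  dual (convex_hull S) y <-> forall i, (i < size S)%N -> -1 <= dot y S`_i.
Proof.
split; first by move=> h i hi; apply: h; apply: mem_hull.
move=> h x [t [t0 [t1 ->]]]; rewrite dot_sum.
apply: (le_trans (y := \sum_i t i * -1)).
  rewrite (eq_bigr (fun i => - t i)); last by move=> i _; rewrite mulrN1.
  by rewrite sumrN t1.
apply: ler_sum => i _; apply: ler_wpM2l => //; exact: h.
Qed.

End Geo.

Section LA.
Variables (R : realType) (n : nat).
Local Notation vec := 'rV[R]_n.

Lemma LA (Q : 'M[R]_n) (u v : vec) :
  row_free (row_mx (const_mx 1 : 'M[R]_(n, 1)) Q) ->
  (forall r, dot (row r Q) u = -1) -> (forall r, dot (row r Q) v = -1) -> u = v.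
Proof.
move=> rf hu hv; set M := row_mx (const_mx 1 : 'M[R]_(n, 1)) Q in rf *.
have ker w : (forall r, dot (row r Q) w = -1) -> (row_mx (1 : 'M[R]_1) w <= kermx M^T)%MS.
  move=> hw; apply/sub_kermxP; rewrite tr_row_mx mul_row_col; apply/rowP => r.
  rewrite !mxE big_ord1 !mxE /=.
  have -> : \sum_(j < n) w 0 j * Q^T j r = dot (row r Q) w.
    by rewrite /dot; apply: eq_bigr => j _; rewrite !mxE mulrC.
  by rewrite hw mulr1 addrN.
have rk : \rank (kermx M^T) = 1%N.
  by rewrite mxrank_ker mxrank_tr (eqP rf) addnK.
have ru0 : row_mx (1 : 'M[R]_1) u != 0 by rewrite row_mx_eq0 oner_eq0.
have kr : (kermx M^T <= row_mx (1 : 'M[R]_1) u)%MS.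
  have [_ <-] := mxrank_leqif_sup (ker u hu).
  by rewrite rank_rV ru0 rk.
have rw : (row_mx (0 : 'M[R]_1) (u - v) <= row_mx (1 : 'M[R]_1) u)%MS.
  apply: submx_trans kr; apply/sub_kermxP.
  have -> : row_mx (0 : 'M[R]_1) (u - v) = row_mx 1 u - row_mx 1 v.
    by rewrite opp_row_mx add_row_mx subrr.
  rewrite mulmxBl; apply/eqP; rewrite subr_eq0; apply/eqP.
  by rewrite (sub_kermxP (ker u hu)) (sub_kermxP (ker v hv)).
have [c hc] := sub_rVP rw.
have c0 : c = 0.
  have := congr1 lsubmx hc; rewrite row_mxKl linearZ /= row_mxKl => /esym /eqP.
  by rewrite scaler_eq0 oner_eq0 orbF => /eqP.
move: hc; rewrite c0 scale0r => /eqP; rewrite row_mx_eq0 => /andP [_].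
by rewrite subr_eq0 => /eqP.
Qed.
End LA.

Section GeoV.
Variables (R : realType) (n : nat) (V : seq 'rV[int]_n).
Local Notation vec := 'rV[R]_n.
Local Notation D := (dual (convex_hull (map (@lat R n) V))).

Lemma nth_lat i : (i < size V)%N -> (map (@lat R n) V)`_i = lat R V`_i.
Proof. by move=> hi; rewrite (nth_map 0). Qed.

Lemma dualP y : D y <-> forall j, (j < size V)%N -> -1 <= dot y (lat R V`_j).
Proof.
rewrite dual_hullP size_map; split=> h j hj; have := h j hj; by rewrite nth_lat.
Qed.

Lemma dual_latP (y : 'rV[int]_n) :
  D (lat R y) <-> forall j, (j < size V)%N -> -1 <= pr y V`_j.
Proof.
have m1 : ((-1 : int)%:~R : R) = -1 by rewrite rmorphN1.
rewrite dualP; split=> h j hj; have := h j hj;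
  by rewrite dot_lat -m1 ler_int.
Qed.

Lemma on_hyper (F : vec -> Prop) (x v : vec) :
  (forall z, F z -> -1 <= dot z v) -> relint F x -> dot x v = -1 ->
  forall q, F q -> dot q v = -1.
Proof.
move=> Hv [Fx [e [e0 He]]] hx q Fq.
have h1 := Hv q Fq.
have [d d0 hd] := small_step (fun l => (x - q) 0 l) e0.
pose z := x + d *: (x - q).
have Fz : F z.
  apply: He.
    exists [:: x; q], (fun i : 'I_2 => if i == ord0 then 1 + d else - d).
    split; first by move=> y; rewrite !inE => /orP [] /eqP ->.
    split; first by rewrite big_ord_recr big_ord1 /= addrK.
    rewrite big_ord_recr big_ord1 /= /z scalerDl scale1r scalerBr scaleNr.
    by rewrite addrA.
  by move=> i; have := hd i; rewrite /z !mxE => h; rewrite (addrC (x 0 i)) addrK.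
have := Hv z Fz; rewrite /z dotDl dotZl dotDl dotNl hx.
move=> h2; apply/eqP; rewrite eq_le h1 andbT.
have : 0 <= d * (-1 - dot q v) by move: h2; rewrite -subr_ge0; congr (_ <= _); ring.
by rewrite pmulr_rge0 // subr_ge0.
Qed.


Lemma dot_self_ge0 (x : vec) : 0 <= dot x x.
Proof. by apply: sumr_ge0 => i _; rewrite -expr2 sqr_ge0. Qed.

Lemma fi_vertex (uV : uniq V) y : in_facet_interior D (lat R y) ->
  D (lat R y) /\ exists i : 'I_(size V), pr y V`_i = -1 /\
    forall j : 'I_(size V), j != i -> 0 <= pr y V`_j.
Proof.
move=> [F [[[c [b [c0 [Hb HF]]]] [Q [HQ rf]]] rel]].
have FD z : F z -> D z by move=> /HF [].
have Fy : F (lat R y) by case: rel.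
have Dy : D (lat R y) by apply: FD.
have Dy' := (dual_latP _).1 Dy.
split => //.
have [/existsP [i /eqP hi] | none] := boolP [exists i : 'I_(size V), pr y V`_i == -1]; last first.
  exfalso; move/negP: c0; apply; apply/eqP/dot_self_eq0.
  have pos (j : 'I_(size V)) : 0 <= pr y V`_j.
    have := Dy' j (ltn_ord j).
    have : pr y V`_j != -1 by apply: contraNneq none => h; apply/existsP; exists j; rewrite h.
    move: (pr y V`_j) => p; lia.
  have [d d0 hd] := small_step (fun j : 'I_(size V) => dot c (lat R V`_j)) (@ltr01 R).
  pose z := lat R y - d *: c.
  have Dz : D z.
    apply/dualP => j hj; rewrite /z dotDl dotNl dotZl.
    have h1 : 0 <= dot (lat R y) (lat R V`_j) by rewrite dot_lat ler0z; exact: (pos (Ordinal hj)).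
    have /= h2 := hd (Ordinal hj).
    have h3 := ler_norm (d * dot c (lat R V`_j)).
    move: h1 h2 h3; move: (dot (lat R y) _) (d * _) (`|d * _|) => p1 p2 p3; lra.
  have Hz := Hb z Dz.
  have [_ hb] := (HF _).1 Fy.
  move: Hz; rewrite /z (dotC c) dotDl dotNl dotZl (dotC (lat R y)) hb => Hz.
  have : d * dot c c <= 0 by move: Hz; move: (d * _) => p; lra.
  rewrite pmulr_rle0 // => h; apply/eqP; rewrite eq_le h dot_self_ge0.
  done.
exists i; split => // j ji.
have hyp (l : 'I_(size V)) : pr y V`_l = -1 -> forall r, dot (row r Q) (lat R V`_l) = -1.
  move=> hl r; apply: (on_hyper (F := F) (x := lat R y)) => //.
  - by move=> z /FD /dualP; apply.
  - by rewrite dot_lat hl rmorphN1.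
have : pr y V`_j != -1.
  apply/eqP => hj.
  have /rowP := LA rf (hyp _ hi) (hyp _ hj) => h.
  have eij : V`_i = V`_j.
    apply/rowP => l; have := h l; rewrite /lat !mxE => /eqP; rewrite eqr_int => /eqP.
    done.
  move/negP: ji; apply; apply/eqP; apply: val_inj => /=.
  by apply/eqP; rewrite -(nth_uniq 0 _ _ uV) // ?eij.
have := Dy' j (ltn_ord j); move: (pr y V`_j) => p; lia.
Qed.


Lemma dotx0 (x : vec) : dot x 0 = 0.
Proof. by rewrite /dot big1 // => i _; rewrite mxE mulr0. Qed.

Lemma no_interior (H0 : interior (convex_hull (map (@lat R n) V)) 0) y :
  D (lat R y) -> interior D (lat R y) -> y = 0.
Proof.
move=> Dy [e [e0 He]].
have pos (j : 'I_(size V)) : 0 <= pr y V`_j.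
  have hj := (dual_latP _).1 Dy j (ltn_ord j).
  suff : pr y V`_j != -1 by move: hj; move: (pr _ _) => p; lia.
  apply/eqP => hj1.
  set v := lat R V`_j.
  have [d d0 hd] := small_step (fun l => v 0 l) e0.
  have Dz : D (lat R y - d *: v).
    apply: He => l; rewrite !mxE addrAC subrr add0r normrN.
    by have := hd l; rewrite /v /lat mxE.
  have := (dualP _).1 Dz j (ltn_ord j); rewrite dotDl dotNl dotZl dot_lat hj1 rmorphN1 => h.
  have : d * dot v v <= 0 by move: h; move: (d * _) => p; lra.
  rewrite pmulr_rle0 // => h2.
  have v0 : v = 0 by apply: dot_self_eq0; apply/eqP; rewrite eq_le h2 dot_self_ge0.
  have : dot (lat R y) v = 0 by rewrite v0 dotx0.
  rewrite dot_lat hj1 rmorphN1 => /eqP; rewrite oppr_eq0 oner_eq0 //.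
have [e1 [e10 H1]] := H0.
have [d d0 hd] := small_step (fun l => (lat R y) 0 l) e10.
have Cz : convex_hull (map (@lat R n) V) (- d *: lat R y).
  apply: H1 => l; rewrite !mxE subr0 mulNr normrN.
  by have := hd l; rewrite /lat mxE.
case: Cz => t [t0 [t1 hz]].
have : dot (lat R y) (- d *: lat R y) = \sum_i t i * dot (lat R y) ((map (@lat R n) V)`_i).
  by rewrite hz dot_sum.
rewrite dotC dotZl => h.
have : 0 <= - d * dot (lat R y) (lat R y).
  rewrite h; apply: sumr_ge0 => i _; apply: mulr_ge0 => //.
  have hi : (i < size V)%N by rewrite -(size_map (@lat R n)) ltn_ord.
  by rewrite nth_lat // dot_lat ler0z (pos (Ordinal hi)).
rewrite mulNr oppr_ge0 pmulr_rle0 // => h2.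
have : lat R y = 0 by apply: dot_self_eq0; apply/eqP; rewrite eq_le h2 dot_self_ge0.
move/rowP => hy; apply/rowP => l; have := hy l; rewrite /lat !mxE => /eqP.
by rewrite intr_eq0 => /eqP.
Qed.

End GeoV.

Lemma ex_filter (T : eqType) (l : seq T) (P : T -> Prop) :
  exists S, uniq S /\ forall y, y \in S <-> (y \in l /\ P y).
Proof.
elim: l => [|x l [S [uS hS]]]; first by exists [::]; split => // y; split => // [[]].
case: (classic (P x)) => Px.
  exists (undup (x :: S)); split; first exact: undup_uniq.
  move=> y; rewrite mem_undup inE; split.
    case/orP => [/eqP ->|/hS [yl Py]]; first by rewrite inE eqxx.
    by rewrite inE yl orbT.
  case; rewrite inE => /orP [/eqP ->|yl] Py; first by rewrite eqxx.
  by apply/orP; right; apply/hS.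
exists S; split => // y; split.
  by move/hS => [yl Py]; rewrite inE yl orbT.
case; rewrite inE => /orP [/eqP ->|yl] Py; first by [].
by apply/hS.
Qed.

Lemma leq_sum_mem (T : eqType) (r : seq T) (F : T -> nat) x :
  x \in r -> (F x <= \sum_(i <- r) F i)%N.
Proof.
elim: r => // a r IH; rewrite inE big_cons => /orP [/eqP ->|/IH h].
  exact: leq_addr.
exact: leq_trans h (leq_addl _ _).
Qed.

Lemma box_fin n (B : nat) (P : 'rV[int]_n -> Prop) :
  (forall y, P y -> forall j, (absz (y ord0 j) <= B)%N) ->
  exists S : seq 'rV[int]_n, uniq S /\ forall y, y \in S <-> P y.
Proof.
move=> hB.
pose box := [seq (\row_j ((z ord0 j : nat)%:Z - B%:Z) : 'rV[int]_n) | z : 'rV['I_(B + B).+1]_n <- enum 'rV['I_(B + B).+1]_n].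
have inbox y : P y -> y \in box.
  move=> Py; apply/mapP; exists (\row_j inord (absz (y ord0 j + B%:Z)%R)); first by rewrite mem_enum.
  apply/rowP => j; have := hB y Py j; rewrite !mxE => h; rewrite inordK.
    have -> : (0 : 'I_1) = ord0 by apply/val_inj.
    move: h; move: (y ord0 j) => p; lia.
  move: h; move: (y ord0 j) => p; lia.
have [S [uS hS]] := ex_filter box P.
exists S; split => // y; rewrite hS; split => [[]|Py] //; split => //; exact: inbox.
Qed.

Lemma bound (R : realType) n (V W : seq 'rV[int]_n)
  (HWD : forall y, dual (convex_hull (map (@lat R n) V)) y <-> convex_hull (map (@lat R n) W) y)
  (y : 'rV[int]_n) : dual (convex_hull (map (@lat R n) V)) (lat R y) ->
  forall j, (absz (y ord0 j) <= \sum_(w <- W) \sum_(l < n) absz (w ord0 l))%N.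
Proof.
move=> Dy j; have [t [t0 [t1 hy]]] := (HWD _).1 Dy.
set B := (\sum_(w <- W) _)%N.
have e : ((y ord0 j)%:~R : R) = \sum_i t i * (map (@lat R n) W)`_i ord0 j.
  have := congr1 (fun m : 'rV[R]_n => m ord0 j) hy; rewrite /= summxE.
  rewrite {1}/lat mxE => ->; apply: eq_bigr => i _; by rewrite mxE.
rewrite -(ler_nat R) natr_absz intr_norm e.
apply: le_trans (ler_norm_sum _ _ _) _.
apply: (le_trans (y := \sum_i t i * B%:R)); last by rewrite -mulr_suml t1 mul1r.
apply: ler_sum => i _; rewrite normrM ger0_norm //; apply: ler_wpM2l => //.
have hi : (i < size W)%N by rewrite -(size_map (@lat R n)) ltn_ord.
rewrite (nth_map 0) // /lat mxE -intr_norm -natr_absz ler_nat.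
apply: leq_trans (leq_sum_mem (fun w : 'rV[int]_n => \sum_(l < n) absz (w ord0 l))%N (mem_nth 0 hi)).
by rewrite (bigD1 j) //= leq_addr.
Qed.

Unset Implicit Arguments.

Theorem lemma3p1 (R : realType) (n : nat) (V W : seq 'rV[int]_n) :
  (* V enumerates the vertex set V(Delta) of Delta = conv V (a lattice polytope) *)
  uniq V ->
  (forall x, is_extreme (convex_hull (map (@lat R n) V)) x <-> x \in map (@lat R n) V) ->
  (* the origin is in the interior of Delta *)
  interior (convex_hull (map (@lat R n) V)) 0 ->
  (* Delta^* is the lattice polytope conv W and W enumerates V(Delta^* ) *)
  uniq W ->
  (forall y, dual (convex_hull (map (@lat R n) V)) y <-> convex_hull (map (@lat R n) W) y) ->
  (forall y, is_extreme (dual (convex_hull (map (@lat R n) V))) y <-> y \in map (@lat R n) W) ->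
  (* for generic a in C: outside a finite exceptional set *)
  exists E : seq (complex R), forall a : complex R, a \notin E ->
  forall xs : 'rV[int]_n,
    in_facet_interior (dual (convex_hull (map (@lat R n) V))) (lat R xs) ->
    exists cs : seq (complex R * 'rV[int]_n),
      (forall p, p \in cs ->
         boundary (dual (convex_hull (map (@lat R n) V))) (lat R p.2) /\
         ~ in_facet_interior (dual (convex_hull (map (@lat R n) V))) (lat R p.2)) /\
      @in_jacobian R n V (@fpoly R n V W a)
        (@zmono R n V xs - \sum_(p <- cs) p.1 *: @zmono R n V p.2).
Proof.
move=> uV _ H0 uW HWD _.
set D := dual (convex_hull (map (@lat R n) V)).
have WD w : w \in W -> D (lat R w).
  move=> wW; apply/HWD; have hi : (index w W < size (map (@lat R n) W))%N.
    by rewrite size_map index_mem.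
  have := mem_hull hi; rewrite (nth_map 0) ?nth_index // -(size_map (@lat R n)) //.
have HW w : w \in W -> forall j : 'I_(size V), -1 <= pr w V`_j.
  move=> wW j; have := (@dual_latP R n V w).1 (WD w wW) j (ltn_ord j); done.
have [S [uS hS]] := box_fin (P := fun y => D (lat R y) /\ (y = 0 \/ in_facet_interior D (lat R y)))
  (fun y Py => bound HWD Py.1).
have k0 : (0 < size V)%N.
  have [e [e0 He]] := H0.
  have : convex_hull (map (@lat R n) V) 0.
    by apply: He => i; rewrite !mxE subrr normr0.
  case=> t [_ [t1 _]]; rewrite lt0n; apply/negP => /eqP s0.
  move: t t1; rewrite size_map s0 => t; rewrite big_ord0 => /eqP.
  by rewrite eq_sym oner_eq0.
pose i0 : 'I_(size V) := Ordinal k0.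
pose p0 : 'rV[int]_n := 0.
have HT : forall s : 'I_(size S), exists T : seq (complex R * 'rV[int]_n),
    (forall q, q \in T -> D (lat R q.2)) /\
    forall a, in_jacobian (@fpoly R n V W a) (a *: @zmono R n V (nth p0 S s) + \sum_(q <- T) q.1 *: @zmono R n V q.2).
  move=> s; have : nth p0 S s \in S by apply: mem_nth.
  move/hS => [Ds [s0 | fis]].
    exists (Teul R W i0); split.
      by move=> q /mapP [w]; rewrite mem_filter => /andP [_ wW] ->; apply: WD.
    by move=> a; rewrite s0; apply: euler.
  have [_ [i [hi hj]]] := fi_vertex uV fis.
  exists (Tdem R W (nth p0 S s) i); split; last by move=> a; apply: demazure.
  move=> q /mapP [w]; rewrite mem_filter => /andP [e0 wW] -> /=.
  apply/dual_latP => j hjj; rewrite prD.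
  have := HW w wW (Ordinal hjj); have := HW w wW i.
  case: (eqVneq (Ordinal hjj) i) => [eji|ji] /=.
    have ij : (i : nat) = j by rewrite -eji.
    rewrite -ij hi; move: e0 => /=; move: (pr w V`_i) => p; lia.
  have := hj _ ji; rewrite /=; move: (pr w V`_j) (pr (nth p0 S s) V`_j) => p p'; lia.
have [T HT'] := fin_all_exists HT.
have J0 a : in_jacobian (@fpoly R n V W a) 0.
  by exists (fun _ => 0); rewrite big1 // => i _; rewrite mul0r.
have JD a x y : in_jacobian (@fpoly R n V W a) x -> in_jacobian (@fpoly R n V W a) y ->
    in_jacobian (@fpoly R n V W a) (x + y).
  move=> [h1 ->] [h2 ->]; exists (fun i => h1 i + h2 i).
  by rewrite -big_split; apply: eq_bigr => i _; rewrite mulrDl.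
have JZ a c x : in_jacobian (@fpoly R n V W a) x -> in_jacobian (@fpoly R n V W a) (c *: x).
  move=> [h ->]; exists (fun i => c *: h i).
  by rewrite scaler_sumr; apply: eq_bigr => i _; rewrite scalerAl.
have [E HE] := @generic _ _ _ p0 (fun a g => in_jacobian (@fpoly R n V W a) g) J0 JD JZ
  (@zmono R n V) S T uS (fun a s => (HT' s).2 a).
exists E => a aE xs hfx.
have Dxs : D (lat R xs) by case: (fi_vertex uV hfx).
have xsS : xs \in S by apply/hS; split => //; right.
have idx : (index xs S < size S)%N by rewrite index_mem.
have [cs [hcs hJ]] := HE a aE (Ordinal idx).
move: hJ; rewrite /= nth_index // => hJ.
exists cs; split => // p pcs.
have [pS [t pT]] := hcs p pcs.
have Dp : D (lat R p.2).
  by move: pT => /mapP [q qT ->]; apply: (HT' t).1.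
have nP : ~ (D (lat R p.2) /\ (p.2 = 0 \/ in_facet_interior D (lat R p.2))).
  by move/hS; apply/negP.
split; last by move=> h; apply: nP; split => //; right.
split => // hint; apply: nP; split => //; left.
exact: (@no_interior R n V H0 p.2 Dp hint).
Qed.
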